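(* Every complete Boolean algebra that admits a strictly positive $\sigma$-additive measure is $\sigma$-uf-linked. In particular, every random algebra is $\sigma$-uf-linked.
   Context: For a poset $\mathbb{P}$ and $\bar p=\langle p_n:n<\omega\rangle$ in $\mathbb{P}$, $\dot W(\bar p)$ names $\{n:p_n\in\dot G\}$. $Q\subseteq\mathbb{P}$ is uf-linked if for every non-principal ultrafilter $D$ on $\omega$ and every sequence $\bar p$ of members of $Q$ there is $q\in\mathbb{P}$ forcing that $\dot W(\bar p)$ meets every member of $D$. $\mathbb{P}$ is $\sigma$-uf-linked if it is a union of countably many uf-linked subsets. (A Boolean algebra is regarded as a poset with its nonzero elements.) *)

(* Defs.v *)
From mathcomp Require Import all_boot all_order.
From Stdlib Require Import Reals.
Set Implicit Arguments. Unset Strict Implicit. Unset Printing Implicit Defensive.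
Import Order.TTheory.

(* Boolean algebras are MathComp's complemented distributive lattices with
   top and bottom ([ctbDistrLatticeType d]).  Subsets are predicates T -> Prop. *)

Definition is_lub {d} {T : porderType d} (S : T -> Prop) (s : T) : Prop :=
  (forall x, S x -> (x <= s)%O) /\
  (forall u, (forall x, S x -> (x <= u)%O) -> (s <= u)%O).

Definition complete_BA {d} (B : ctbDistrLatticeType d) : Prop :=
  forall S : B -> Prop, exists s, is_lub S s.

Definition sigma_additive_measure {d} (B : ctbDistrLatticeType d) (mu : B -> R) : Prop :=
  mu (\bot)%O = 0%R /\
  (forall b, (0 <= mu b)%R) /\
  (forall (b : nat -> B) (s : B),
      (forall i j, i <> j -> Order.meet (b i) (b j) = (\bot)%O) ->
      is_lub (fun x => exists n, x = b n) s ->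
      infinite_sum (fun n => mu (b n)) (mu s)).

Definition strictly_positive {d} (B : ctbDistrLatticeType d) (mu : B -> R) : Prop :=
  forall b : B, b <> (\bot)%O -> (0 < mu b)%R.

Definition nonprincipal_ultrafilter (D : (nat -> Prop) -> Prop) : Prop :=
  D (fun _ => True) /\
  ~ D (fun _ => False) /\
  (forall A C, D A -> D C -> D (fun n => A n /\ C n)) /\
  (forall A C, D A -> (forall n, A n -> C n) -> D C) /\
  (forall A, D A \/ D (fun n => ~ A n)) /\
  (forall k : nat, ~ D (fun n => n = k)).

(* A forcing poset is given by a carrier predicate [P] on a type [T] with
   a preorder [le] (stronger = smaller). *)
Definition compatible {T} (P : T -> Prop) (le : T -> T -> Prop) (x y : T) : Prop :=
  exists z, P z /\ le z x /\ le z y.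

(* q forces "W(p) meets A" (A a ground-model set of naturals), where
   W(p) names {n | p_n in G}: the standard forcing relation for the
   existential formula "exists n in A, p_n in G", i.e. every r <= q in P
   is compatible with p_n for some n in A. *)
Definition forces_W_meets {T} (P : T -> Prop) (le : T -> T -> Prop)
  (q : T) (p : nat -> T) (A : nat -> Prop) : Prop :=
  forall r, P r -> le r q -> exists n, A n /\ compatible P le r (p n).

Definition uf_linked {T} (P : T -> Prop) (le : T -> T -> Prop) (Q : T -> Prop) : Prop :=
  (forall x, Q x -> P x) /\
  forall D, nonprincipal_ultrafilter D ->
  forall p : nat -> T, (forall n, Q (p n)) ->
  exists q, P q /\ forall A, D A -> forces_W_meets P le q p A.

Definition sigma_uf_linked {T} (P : T -> Prop) (le : T -> T -> Prop) : Prop :=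
  exists Qs : nat -> T -> Prop,
    (forall k, uf_linked P le (Qs k)) /\
    (forall x, P x -> exists k, Qs k x).

Definition BA_poset {d} (B : ctbDistrLatticeType d) : B -> Prop :=
  fun b => b <> (\bot)%O.

Definition BA_le {d} (B : ctbDistrLatticeType d) : B -> B -> Prop :=
  fun a b => (a <= b)%O.

(* Main.v *)
Require Import Defs.
From mathcomp Require Import all_boot all_order.
From Stdlib Require Import Reals Lra Classical ClassicalEpsilon.
Import Order.Theory.
Set Implicit Arguments. Unset Strict Implicit.
Local Open Scope R_scope.

Lemma lat_bot_le d (B : ctbDistrLatticeType d) (x : B) : (x <= \bot)%O -> x = \bot%O.
Proof. by move=> h; apply/le_anti; rewrite h le0x. Qed.

Lemma mu_add d (B : ctbDistrLatticeType d) (mu : B -> R) :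
  sigma_additive_measure mu -> forall a b : B, (a `&` b)%O = \bot%O ->
  mu (a `|` b)%O = mu a + mu b.
Proof.
move=> [H0 [Hpos Hsig]] a b hab.
pose f (n : nat) : B := match n with 0%nat => a | 1%nat => b | _ => \bot%O end.
have h1 : infinite_sum (fun n => mu (f n)) (mu (a `|` b)%O).
  apply: Hsig.
  - have hba : (b `&` a)%O = \bot%O by rewrite meetC.
    move=> [|[|i]] [|[|j]] //= hij; try (by case: hij); try (by []);
      apply: lat_bot_le; rewrite ?leIl ?leIr //.
  - split.
    + move=> x [[|[|n]] ->] /=; by rewrite ?leUl ?leUr ?le0x.
    + move=> u hu; rewrite leUx (hu a) ?(hu b) //; [by exists 1%nat | by exists 0%nat].
have h2 : infinite_sum (fun n => mu (f n)) (mu a + mu b).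
  have hs : forall n, sum_f_R0 (fun n => mu (f n)) (S n) = mu a + mu b.
    elim=> [|n IH] /=; first by [].
    rewrite /= in IH; rewrite IH H0; ring.
  move=> e he; exists 1%nat => n hn.
  case: n hn => [|n] hn; first by inversion hn.
  rewrite hs /R_dist Rminus_diag Rabs_R0 //.
exact: (uniqueness_sum _ _ _ h1 h2).
Qed.

Lemma mu_diff d (B : ctbDistrLatticeType d) (mu : B -> R) :
  sigma_additive_measure mu -> forall a b : B, (a <= b)%O ->
  mu (b `&` ~` a)%O = mu b - mu a.
Proof.
move=> Hmu a b hab.
have e : (a `|` (b `&` ~` a))%O = b.
  rewrite joinIr joinxC meetx1; apply/le_anti; rewrite leUx hab lexx leUr //.
have h := @mu_add _ _ _ Hmu a (b `&` ~` a)%O.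
rewrite e in h; rewrite h; first ring.
apply: lat_bot_le; rewrite -(meetxC a); apply: leI2 => //; exact: leIr.
Qed.

Lemma mu_mono d (B : ctbDistrLatticeType d) (mu : B -> R) :
  sigma_additive_measure mu -> forall a b : B, (a <= b)%O -> mu a <= mu b.
Proof.
move=> Hmu a b hab; have := mu_diff Hmu hab; have := proj1 (proj2 Hmu) (b `&` ~` a)%O.
lra.
Qed.

Lemma mu_compl d (B : ctbDistrLatticeType d) (mu : B -> R) :
  sigma_additive_measure mu -> forall a : B, mu (~` a)%O = mu \top%O - mu a.
Proof.
move=> Hmu a; rewrite -(mu_diff Hmu (lex1 a)) meet1x //.
Qed.

Lemma cont_above d (B : ctbDistrLatticeType d) (mu : B -> R) :
  sigma_additive_measure mu -> forall (u : nat -> B) (eps : R), 0 < eps ->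
  (forall k, (u (S k) <= u k)%O) -> (forall k, eps <= mu (u k)) ->
  (forall x, (forall k, (x <= u k)%O) -> x = \bot%O) -> False.
Proof.
move=> Hmu u eps heps hdec hge hinf.
have mono : forall i j, (i <= j)%nat -> (u j <= u i)%O.
  move=> i; elim=> [|j IH] hij; first by rewrite leqn0 in hij; move/eqP: hij => ->.
  case: (ltngtP i j.+1) hij => // [hlt|->] _; last by [].
  apply: le_trans (hdec j) _; exact: IH.
pose dd (n : nat) : B := match n with 0%nat => (~` u 0%nat)%O | S k => (u k `&` ~` u (S k))%O end.
have ddC : forall i, (dd i <= ~` u i)%O by case=> [|i] //=; exact: leIr.
have ddU : forall i j, (i < j)%nat -> (dd j <= u i)%O.
  move=> i [|j] //= hij; apply: le_trans (leIl _ _) _; exact: mono.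
have hdisj0 : forall i j, (i < j)%nat -> (dd i `&` dd j)%O = \bot%O.
  move=> i j hij; apply: lat_bot_le; rewrite -(meetxC (u i)) meetC.
  exact: leI2 (ddU _ _ hij) (ddC i).
have hsum : infinite_sum (fun n => mu (dd n)) (mu \top%O).
  apply: (proj2 (proj2 Hmu)).
  - move=> i j hij; case: (ltngtP i j) => [hlt|hlt|e]; first exact: hdisj0.
    + by rewrite meetC; apply: hdisj0.
    + by move: e hij => ->.
  - split; first by move=> x _; exact: lex1.
    move=> x hx.
    have hk : forall k, (~` x <= u k)%O.
      elim=> [|k IH]; first by rewrite leCx; apply: hx; exists 0%nat.
      have h1 : (~` x `&` ~` u k.+1 <= x)%O.
        apply: le_trans (hx (dd k.+1) (ex_intro _ k.+1 erefl)); exact: leI2.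
      have h2 : (~` x `&` ~` u k.+1 = \bot)%O.
        apply: lat_bot_le; rewrite -(meetxC x) lexI h1 /=; exact: leIl.
      by move/eqP: h2; rewrite disj_leC complK.
    have := hinf _ hk => h; by rewrite -[x]complK h compl0.
have hpart : forall k, sum_f_R0 (fun n => mu (dd n)) k = mu (~` u k)%O.
  elim=> [|k IH] //=; rewrite IH -mu_add //.
  - congr (mu _); rewrite joinIr joinC joinxC meet1x; apply/le_anti.
    rewrite leUx lexx andbT leUr /= leC hdec //.
  - apply: lat_bot_le; rewrite -(meetxC (u k)) meetC; apply: leI2 => //; exact: leIl.
have [N HN] := hsum eps heps.
have := HN N (le_n N); rewrite hpart (mu_compl Hmu) /R_dist.
have := hge N => hN.
rewrite Rabs_left1; lra.
Qed.

Theorem lemma3p4 (d : Order.disp_t) (B : ctbDistrLatticeType d) :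
  complete_BA B ->
  (exists mu : B -> R, sigma_additive_measure mu /\ strictly_positive mu) ->
  sigma_uf_linked (@BA_poset d B) (@BA_le d B).
Proof.
move=> hcomp [mu [Hmu Hpos]].
have sup_ex : forall S : B -> Prop, {s | Defs.is_lub S s} :=
  fun S => constructive_indefinite_description _ (hcomp S).
pose sup S := proj1_sig (sup_ex S).
have sup_ub : forall S x, S x -> (x <= sup S)%O.
  by move=> S x hx; exact: (proj1 (proj2_sig (sup_ex S)) x hx).
have sup_least : forall (S : B -> Prop) x, (forall y, S y -> (y <= x)%O) -> (sup S <= x)%O.
  by move=> S x hx; exact: (proj2 (proj2_sig (sup_ex S)) x hx).
have mu_pos := proj1 (proj2 Hmu).
exists (fun k b => b <> \bot%O /\ (0 < k)%nat /\ / INR k < mu b); split.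
2:{ move=> x hx; have hm := Hpos x hx.
    have [N [HN1 HN2]] := archimed_cor1 _ hm.
    exists N; split; [exact: hx | split]. 2: exact: HN1. exact/ssrnat.ltP. }
move=> k; split; first by move=> x [].
move=> D [hT [hF [hI [hUp [hU hNP]]]]] p hp.
have [_ [hk _]] := hp 0%nat.
pose eps := / INR k.
have heps : 0 < eps.
  apply: Rinv_0_lt_compat; apply: lt_0_INR; exact/ssrnat.ltP.
pose s (A : nat -> Prop) := sup (fun x => exists n, A n /\ x = p n).
have s_ub : forall (A : nat -> Prop) n, A n -> (p n <= s A)%O.
  by move=> A n hn; apply: sup_ub; exists n.
have s_least : forall (A : nat -> Prop) x, (forall n, A n -> (p n <= x)%O) -> (s A <= x)%O.
  by move=> A x hx; apply: sup_least => y [n [hn ->]]; exact: hx.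
have s_mono : forall (A A' : nat -> Prop), (forall n, A n -> A' n) -> (s A <= s A')%O.
  by move=> A A' h; apply: s_least => n hn; apply: s_ub; exact: h.
have s_big : forall A, D A -> eps <= mu (s A).
  move=> A hA.
  have [n hn] : exists n, A n.
    apply: NNPP => hno; apply: hF; apply: (hUp _ _ hA) => n hn; apply: hno; by exists n.
  have [_ [_ hpn]] := hp n.
  have := mu_mono Hmu (s_ub _ _ hn); rewrite /eps; lra.
pose E (r : R) := exists A, D A /\ r = - mu (s A).
have [L [HL1 HL2]] : {L | Raxioms.is_lub E L}.
  apply: completeness.
  - exists 0 => r [A [_ ->]]; have := mu_pos (s A); lra.
  - exists (- mu (s (fun _ => True))); by exists (fun _ => True).
pose m := - L.
have m_lb : forall A, D A -> m <= mu (s A).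
  move=> A hA; have := HL1 (- mu (s A)) (ex_intro _ A (conj hA erefl)); rewrite /m; lra.
have m_approx : forall eta, 0 < eta -> exists A, D A /\ mu (s A) < m + eta.
  move=> eta heta; apply: NNPP => hno.
  have : L <= L - eta.
    apply: HL2 => r [A [hA ->]].
    have : ~ (mu (s A) < m + eta) by move=> h; apply: hno; exists A.
    rewrite /m; lra.
  lra.
have Af_ex : forall j : nat, {A | D A /\ mu (s A) < m + / INR (S j)}.
  move=> j; apply: constructive_indefinite_description; apply: m_approx.
  apply: Rinv_0_lt_compat; apply: lt_0_INR; exact: Nat.lt_0_succ.
pose Af j := proj1_sig (Af_ex j).
pose A' (j : nat) := fun n => forall i, (i <= j)%nat -> Af i n.
have DA' : forall j, D (A' j).
  elim=> [|j IH].
  - apply: (hUp _ _ (proj1 (proj2_sig (Af_ex 0%nat)))) => n hn i; rewrite leqn0 => /eqP ->; exact: hn.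
  - apply: (hUp _ _ (hI _ _ IH (proj1 (proj2_sig (Af_ex j.+1))))) => n [h1 h2] i.
    rewrite leq_eqVlt ltnS => /orP [/eqP ->|hi]; [exact: h2 | exact: h1].
pose u j := s (A' j).
have hdec : forall j, (u j.+1 <= u j)%O.
  move=> j; apply: s_mono => n hn i hi; apply: hn; exact: leqW.
have uAf : forall j, mu (u j) < m + / INR (S j).
  move=> j; have := proj2 (proj2_sig (Af_ex j)); rewrite -/(Af j) => h.
  have : mu (u j) <= mu (s (Af j)).
    apply: (mu_mono Hmu); apply: s_mono => n hn; exact: hn.
  lra.
pose t := sup (fun x => forall j, (x <= u j)%O).
have t_le : forall j, (t <= u j)%O by move=> j; apply: sup_least => y hy; exact: hy.
have t_nz : t <> \bot%O.
  move=> ht; apply: (cont_above Hmu heps hdec (fun j => s_big _ (DA' j))).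
  move=> x hx; apply: lat_bot_le; rewrite -ht; apply: sup_ub; exact: hx.
have t_below : forall A, D A -> (t <= s A)%O.
  move=> A hA.
  pose c := (t `&` ~` s A)%O.
  have hc : forall j, mu c < / INR (S j).
    move=> j.
    pose A2 := fun n => A n /\ A' j n.
    have DA2 : D A2 by exact: hI.
    have h1 : (s A2 <= s A)%O by apply: s_mono => n [].
    have h2 : (s A2 <= u j)%O by apply: s_mono => n [].
    have : (c <= u j `&` ~` s A2)%O by apply: leI2 => //; rewrite leC.
    move/(mu_mono Hmu); rewrite (mu_diff Hmu h2).
    have := m_lb _ DA2; have := uAf j; lra.
  have hc0 : mu c <= 0.
    apply: Rnot_lt_le => hpos.
    have [N [HN1 HN2]] := archimed_cor1 _ hpos.
    case: N HN1 HN2 => [|N] HN1 HN2; first by inversion HN2.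
    have := hc N; lra.
  have cbot : c = \bot%O.
    apply: NNPP => hne; have := Hpos c hne; lra.
  by move/eqP: cbot; rewrite disj_leC complK.
exists t; split; first exact: t_nz.
move=> A hA r hr hrt.
apply: NNPP => hno.
have hall : forall n, A n -> (p n <= ~` r)%O.
  move=> n hn; rewrite -disj_leC meetC; apply/eqP; apply: NNPP => hne.
  apply: hno; exists n; split => //; exists (r `&` p n)%O; split => //.
  by split; [exact: leIl | exact: leIr].
have : (r <= ~` r)%O.
  apply: le_trans hrt _; apply: le_trans (t_below _ hA) _; exact: s_least.
rewrite -disj_leC meetxx => /eqP; exact: hr.
Qed.
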